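(* Let $a,A,b,B:\mathbb Z_{\ge0}\to R$ be any four functions with values in a commutative ring $R$, and work in the formal power series ring $R[[X]]$. Define $$F(a,A;b,B)=\sum_{K,L,M\ge0}a(K)A(K+M)b(L)B(L+M)X^{K+L+M},\qquad C(a,b)=\sum_{r\ge0}a(r)b(r)X^r.$$ Then $$F(a,A;b,B)+F(A,a;B,b)=C(A\star b,\,a\star B)+C(a,A)\,C(b,B),$$ where $\star$ denotes additive convolution, $(f\star g)(n)=\sum_{i+j=n}f(i)g(j)$.
   Context: All sums are over nonnegative integers; the identity is an equality of formal power series in $X$. *)

(* Defs.v *)
(* Formal power series in R[[X]] are represented by their
   coefficient sequences  nat -> R ; addition is pointwise and the product of
   R[[X]] is the Cauchy product [fps_mul]. *)
From mathcomp Require Import all_boot all_algebra.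
Set Implicit Arguments. Unset Strict Implicit. Unset Printing Implicit Defensive.
Import GRing.Theory.
Local Open Scope ring_scope.

Definition fps (R : comPzRingType) := nat -> R.

Definition fps_add (R : comPzRingType) (f g : fps R) : fps R := fun n => f n + g n.

Definition conv (R : comPzRingType) (f g : nat -> R) : nat -> R :=
  fun n => \sum_(i < n.+1) \sum_(j < n.+1 | (i + j == n)%N) f i * g j.

Definition fps_mul (R : comPzRingType) (f g : fps R) : fps R := conv f g.

Definition Cser (R : comPzRingType) (a b : nat -> R) : fps R := fun r => a r * b r.

Definition Fser (R : comPzRingType) (a A b B : nat -> R) : fps R :=
  fun n => \sum_(K < n.+1) \sum_(L < n.+1) \sum_(M < n.+1 | (K + L + M == n)%N)
             a K * A (K + M)%N * b L * B (L + M)%N.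

(* Main.v *)
Require Import Defs.
From mathcomp Require Import all_boot all_algebra.
From mathcomp Require Import zify ring.
From Stdlib Require Import FunctionalExtensionality.
Import GRing.Theory.
Local Open Scope ring_scope.

Section S.
Variable R : comPzRingType.

Lemma collapse n (m : nat) (F : 'I_n.+1 -> R) (h : (m < n.+1)%N) :
  \sum_(j < n.+1 | (j : nat) == m) F j = F (Ordinal h).
Proof.
by rewrite (big_pred1 (Ordinal h)) // => j.
Qed.

Lemma Fform (a A b B : nat -> R) n : Fser a A b B n =
  \sum_(K < n.+1) \sum_(L < n.+1 | (K + L <= n)%N) a K * A (n - L)%N * b L * B (n - K)%N.
Proof.
rewrite /Fser; apply: eq_bigr => K _; rewrite [RHS]big_mkcond /=.
apply: eq_bigr => L _; case: (boolP (K + L <= n)%N) => h.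
- rewrite (eq_bigl (fun M : 'I_n.+1 => (M : nat) == (n - (K + L))%N)); last first.
    by move=> M; apply/eqP/eqP; lia.
  have hlt : (n - (K + L) < n.+1)%N by lia.
  rewrite (@collapse _ _ _ hlt) /=.
  have -> : (K + (n - (K + L)) = n - L)%N by lia.
  have -> : (L + (n - (K + L)) = n - K)%N by lia.
  by [].
- by rewrite big1 // => M /eqP; lia.
Qed.

Lemma convL (f g : nat -> R) n : conv f g n = \sum_(i < n.+1) f i * g (n - i)%N.
Proof.
apply: eq_bigr => i _.
rewrite (eq_bigl (fun j : 'I_n.+1 => (j : nat) == (n - i)%N)); last first.
  by move=> j; apply/eqP/eqP; have := ltn_ord i; lia.
have hlt : (n - i < n.+1)%N by have := ltn_ord i; lia.
by rewrite (@collapse _ _ _ hlt).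
Qed.

Lemma convR (f g : nat -> R) n : conv f g n = \sum_(j < n.+1) f (n - j)%N * g j.
Proof.
rewrite convL (reindex_inj rev_ord_inj) /=; apply: eq_bigr => j _.
rewrite subSS subKn //; have := ltn_ord j; lia.
Qed.

End S.

Theorem mainTheorem2 (R : comPzRingType) (a A b B : nat -> R) :
  fps_add (Fser a A b B) (Fser A a B b)
  = fps_add (Cser (conv A b) (conv a B)) (fps_mul (Cser a A) (Cser b B)).
Proof.
apply: functional_extensionality => n.
rewrite /fps_add /fps_mul.
rewrite [Cser (conv A b) _ n]/Cser [conv A b n]convR [conv a B n]convL convL.
rewrite !Fform /Cser.
rewrite big_distrlr /=.
set T := fun (j i : 'I_n.+1) => A (n - j)%N * b j * (a i * B (n - i)%N).
have HP : \sum_(j < n.+1) \sum_(i < n.+1) T j i =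
  \sum_(j < n.+1) \sum_(i < n.+1 | (i + j <= n)%N) T j i +
  \sum_(j < n.+1) \sum_(i < n.+1 | ~~ (i + j <= n)%N) T j i.
  by rewrite -big_split; apply: eq_bigr => j _; rewrite (bigID (fun i : 'I_n.+1 => (i + j <= n)%N)).
set U := fun (K L : 'I_n.+1) => A K * a (n - L)%N * B L * b (n - K)%N.
have HF2 : \sum_(K < n.+1) \sum_(L < n.+1 | (K + L <= n)%N) U K L =
  \sum_(K < n.+1) \sum_(L < n.+1 | (K + L <= n)%N && (K + L == n)%N) U K L +
  \sum_(K < n.+1) \sum_(L < n.+1 | (K + L <= n)%N && ~~ (K + L == n)%N) U K L.
  by rewrite -big_split; apply: eq_bigr => j _; rewrite (bigID (fun i : 'I_n.+1 => (j + i == n)%N)).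
rewrite HP HF2 {HP HF2}.
have e1 : \sum_(K < n.+1) \sum_(L < n.+1 | (K + L <= n)%N) a K * A (n - L)%N * b L * B (n - K)%N
   = \sum_(j < n.+1) \sum_(i < n.+1 | (i + j <= n)%N) T j i.
  rewrite (exchange_big_dep predT) //=; apply: eq_bigr => j _.
  apply: eq_bigr => i _; rewrite /T; ring.
have e2 : \sum_(K < n.+1) \sum_(L < n.+1 | (K + L <= n)%N && (K + L == n)%N) U K L
   = \sum_(i < n.+1) a i * A i * (b (n - i)%N * B (n - i)%N).
  apply: eq_bigr => K _.
  rewrite (eq_bigl (fun L : 'I_n.+1 => (L : nat) == (n - K)%N)); last first.
    by move=> L; apply/andP/eqP => [[_ /eqP]|?]; [|split; [|apply/eqP]]; have := ltn_ord K; lia.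
  have hlt : (n - K < n.+1)%N by have := ltn_ord K; lia.
  rewrite (@collapse _ _ _ _ hlt) /= /U.
  rewrite subKn; last by have := ltn_ord K; lia.
  ring.
have e3 : \sum_(K < n.+1) \sum_(L < n.+1 | (K + L <= n)%N && ~~ (K + L == n)%N) U K L
   = \sum_(j < n.+1) \sum_(i < n.+1 | ~~ (i + j <= n)%N) T j i.
  rewrite (reindex_inj rev_ord_inj) /=; apply: eq_bigr => j _.
  rewrite (reindex_inj rev_ord_inj) /=.
  apply: eq_big => [i|i _]; rewrite /T /U /= !subSS.
    by apply/idP/idP; have := ltn_ord i; have := ltn_ord j; lia.
  have hi := ltn_ord i; have hj := ltn_ord j.
  have -> : (n - (n - i) = i)%N by lia.
  have -> : (n - (n - j) = j)%N by lia.
  ring.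
by rewrite e1 e2 e3 -addrA [X in _ + X = _]addrC.
Qed.
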